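(* Let $G=(V,E)$ be a finite simple graph, $\omega\in\mathrm{Acyc}(G)$, $P=P(G,[\omega])$, and $\pi,\pi'$ partitions of $V$. Then: (a) If $\pi$ is closed with respect to the ordinary poset $P(G,\omega)$, then $\pi$ is closed with respect to the toric poset $P(G,[\omega])$. (b) If $\pi\le_V\pi'$ then $\mathrm{cl}^{\mathrm{tor}}_P(\pi)\le_V\mathrm{cl}^{\mathrm{tor}}_P(\pi')$. (c) If $\pi\le_V\pi'\le_V\mathrm{cl}^{\mathrm{tor}}_P(\pi)$ then $\mathrm{cl}^{\mathrm{tor}}_P(\pi')=\mathrm{cl}^{\mathrm{tor}}_P(\pi)$. (d) $\mathrm{cl}^{\mathrm{tor}}_{P(G,[\omega])}(\pi)\le_V\mathrm{cl}_{P(G,\omega)}(\pi)$. Moreover, both (a)'s converse and equality in (d) can fail (e.g. for $G=K_3$, $\omega$ the orientation $3\to 1$, $3\to 2$, $1\to 2$, and $\pi=\{\{1\},\{2,3\}\}$, one has $\mathrm{cl}^{\mathrm{tor}}_{P(G,[\omega])}(\pi)=\pi\ne\{\{1,2,3\}\}=\mathrm{cl}_{P(G,\omega)}(\pi)$).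
   Context: $\le_V$ is the refinement order on partitions of $V$: $\pi\le_V\pi'$ iff every block of $\pi$ is contained in a block of $\pi'$. $\mathrm{Acyc}(G)$, flips, $\equiv$, $[\omega]$, $P(G,\omega)$ (transitive closure of $\omega$), the toric chamber $c(P)\subseteq\mathbb{R}^V/\mathbb{Z}^V$ of $P=P(G,[\omega])$ (a connected component of the complement of the toric hyperplanes $\{x_i\equiv x_j \bmod 1\}$, $\{i,j\}\in E$, corresponding to $[\omega]$), $D_\pi=\{x\in\mathbb{R}^V:x_i=x_j$ for $i,j$ in a common block$\}$ and $D^{\mathrm{tor}}_\pi$ its image in $\mathbb{R}^V/\mathbb{Z}^V$ are as usual. Toric closure: $\mathrm{cl}^{\mathrm{tor}}_P(\pi)$ is the coarsest $\bar\pi\ge_V\pi$ with $\overline{c(P)}\cap D^{\mathrm{tor}}_{\bar\pi}=\overline{c(P)}\cap D^{\mathrm{tor}}_\pi$. Ordinary closure: for a poset $Q=P(G,\omega)$, contracting the blocks of $\pi$ gives a preorder on the blocks; $\mathrm{cl}_Q(\pi)$ is obtained by merging all blocks that are equivalent in this preorder (i.e. lie in a common strongly connected component of $\omega/\!\sim_\pi$), the unique minimal coarsening of $\pi$ whose contraction is acyclic. A partition is closed with respect to $Q$ (resp. $P$) if it equals its closure. *)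

(* Defs.v *)
From Stdlib Require Import Reals ClassicalEpsilon Relation_Operators.
From mathcomp Require Import all_boot.

Set Implicit Arguments.
Unset Strict Implicit.
Unset Printing Implicit Defensive.

Section Defs.
Variable V : finType.

Definition simple_graph (E : rel V) : Prop :=
  (forall u v, E u v = E v u) /\ (forall u, ~~ E u u).

Definition orientation (E : rel V) (w : rel V) : Prop :=
  (forall u v, E u v = (w u v || w v u)) /\ (forall u v, w u v -> ~~ w v u).

Definition acyclic_orientation (E : rel V) (w : rel V) : Prop :=
  orientation E w /\ (forall u v, w u v -> ~~ connect w v u).

(* flips: converting a source into a sink (the inverse, sink to source, is
   obtained by symmetry of the generated equivalence). *)
Definition is_source (w : rel V) (v : V) : Prop := forall u, ~~ w u v.

Definition flip_at (w : rel V) (v : V) : rel V :=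
  fun x y => if (x == v) || (y == v) then w y x else w x y.

Definition flip_step (w w' : rel V) : Prop :=
  exists v, is_source w v /\ (forall x y, w' x y = flip_at w v x y).

Definition toric_equiv (w w' : rel V) : Prop :=
  clos_refl_sym_trans (rel V) flip_step w w'.

Definition point_orientation (E : rel V) (x : V -> R) : rel V :=
  fun i j => E i j && (if Rlt_dec (frac_part (x i)) (frac_part (x j))
                       then true else false).

(* Preimage in R^V of the toric chamber c(P(G,[w])): points off all toric
   hyperplanes x_i = x_j mod 1 ({i,j} in E) whose induced orientation lies
   in the toric class [w]. *)
Definition chamber (E : rel V) (w : rel V) (x : V -> R) : Prop :=
  (forall i j, E i j -> frac_part (x i) <> frac_part (x j)) /\
  toric_equiv (point_orientation E x) w.

(* topological closure in R^V (equivalently, preimage of the closure in the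
   torus, as the quotient map is an open covering map) *)
Definition in_closure (S : (V -> R) -> Prop) (x : V -> R) : Prop :=
  forall eps, Rlt 0 eps ->
    exists y, S y /\ forall i, Rlt (Rabs (Rminus (x i) (y i))) eps.

(* preimage of D^tor_pi: x_i = x_j mod 1 whenever i,j share a block *)
Definition in_Dtor (pi : {set {set V}}) (x : V -> R) : Prop :=
  forall B, B \in pi -> forall i j, i \in B -> j \in B ->
    exists k : Z, Rminus (x i) (x j) = IZR k.

Definition is_partition (pi : {set {set V}}) : Prop := partition pi [set: V].

Definition refines (pi pi' : {set {set V}}) : Prop :=
  forall B, B \in pi -> exists2 B', B' \in pi' & B \subset B'.

Definition same_trace (E w : rel V) (pi pi' : {set {set V}}) : Prop :=
  forall x, in_closure (chamber E w) x -> (in_Dtor pi x <-> in_Dtor pi' x).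

Definition is_tor_closure (E w : rel V) (pi pb : {set {set V}}) : Prop :=
  is_partition pb /\ refines pi pb /\ same_trace E w pi pb /\
  (forall p, is_partition p -> refines pi p -> same_trace E w pi p ->
     refines p pb).

Definition tor_cl (E w : rel V) (pi : {set {set V}}) : {set {set V}} :=
  epsilon (inhabits pi) (is_tor_closure E w pi).

Definition tor_closed (E w : rel V) (pi : {set {set V}}) : Prop :=
  tor_cl E w pi = pi.

(* ordinary closure cl_Q(pi), Q = P(G,w): u reaches v in the contracted
   digraph w/~pi iff connect (w or same-block) u v; merge the blocks lying in
   a common strongly connected component. *)
Definition contr_rel (w : rel V) (pi : {set {set V}}) : rel V :=
  [rel u v | w u v || (pblock pi u == pblock pi v)].

Definition ord_cl (w : rel V) (pi : {set {set V}}) : {set {set V}} :=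
  equivalence_partition
    (fun u v => connect (contr_rel w pi) u v && connect (contr_rel w pi) v u)
    [set: V].

Definition ord_closed (w : rel V) (pi : {set {set V}}) : Prop :=
  ord_cl w pi = pi.

End Defs.

(* ---------- the K_3 example (vertices 1,2,3 as 0,1,2 in 'I_3) ---------- *)
Definition K3 : rel 'I_3 := [rel u v | u != v].
Definition w3 : rel 'I_3 :=
  [rel u v | [|| (nat_of_ord u == 2) && (nat_of_ord v == 0),
                 (nat_of_ord u == 2) && (nat_of_ord v == 1) |
                 (nat_of_ord u == 0) && (nat_of_ord v == 1)]].
Definition pi3 : {set {set 'I_3}} :=
  [set [set (inord 0 : 'I_3)]; [set (inord 1 : 'I_3); (inord 2 : 'I_3)]].

(* Main.v *)
Require Import Defs.
From Stdlib Require Import Reals Lra ZArith Lia ClassicalEpsilon FunctionalExtensionality Relation_Operators.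
From mathcomp Require Import all_boot.
Set Implicit Arguments. Unset Strict Implicit. Unset Printing Implicit Defensive.

Lemma connect_mono (T : finType) (e : rel T) (f : T -> nat) :
  (forall u v, e u v -> (f u <= f v)%N) ->
  forall u v, connect e u v -> (f u <= f v)%N.
Proof.
move=> H u v /connectP [p pth ->].
elim: p u pth => [|a p IH] u //= /andP [e1 pth].
exact: leq_trans (H _ _ e1) (IH _ pth).
Qed.

Lemma frac_id (x : R) : Rle 0 x -> Rlt x 1 -> frac_part x = x.
Proof.
move=> H0 H1; rewrite /frac_part /Int_part.
have -> : up x = 1%Z by symmetry; apply: tech_up; simpl; lra.
simpl; ring.
Qed.

Lemma noint (k : Z) : IZR k <> Rinv 4 /\ IZR k <> Ropp (Rinv 4).
Proof.
case: (Z_lt_le_dec k 1) => Hk.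
- have : Rle (IZR k) 0 by apply: IZR_le; lia.
  move=> H; split => E0; rewrite E0 in H; try lra.
  case: (Z_lt_le_dec k 0) => Hk'.
  + have : Rle (IZR k) (-1) by apply: IZR_le; lia. lra.
  + have : Rle 0 (IZR k) by apply: IZR_le; lia. lra.
- have : Rle 1 (IZR k) by apply: IZR_le; lia. lra.
Qed.

Section General.
Variable V : finType.
Implicit Types (pi p q : {set {set V}}) (E w : rel V).

Lemma part_mem pi B : is_partition pi -> B \in pi -> exists i, i \in B.
Proof.
case/and3P => _ _ H0 HB; case: (set_0Vmem B) => [E0|[i Hi]]; last by exists i.
by rewrite -E0 HB in H0.
Qed.

Lemma refines_sub p q : is_partition p -> is_partition q ->
  refines p q -> refines q p -> p \subset q.
Proof.
move=> Hp Hq Hpq Hqp; apply/subsetP => B HB.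
have [B' HB' s1] := Hpq B HB; have [B'' HB'' s2] := Hqp B' HB'.
have [i Hi] := part_mem Hp HB.
have tp : trivIset p by case/and3P: Hp.
have e1 : B = B''.
  by rewrite -(def_pblock tp HB Hi) (def_pblock tp HB'' (subsetP s2 _ (subsetP s1 _ Hi))).
have -> : B = B'.
  apply/eqP; rewrite eqEsubset s1 /=; by rewrite e1.
done.
Qed.

Lemma refines_antisym p q : is_partition p -> is_partition q ->
  refines p q -> refines q p -> p = q.
Proof.
move=> Hp Hq Hpq Hqp; apply/eqP; rewrite eqEsubset.
by rewrite (refines_sub Hp Hq Hpq Hqp) (refines_sub Hq Hp Hqp Hpq).
Qed.

Lemma Dtor_ref p q x : refines p q -> in_Dtor q x -> in_Dtor p x.
Proof.
move=> Hr Hq B HB i j Hi Hj; have [B' HB' s] := Hr B HB.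
by apply: (Hq B' HB'); apply: (subsetP s).
Qed.

Definition tor_rel E w pi (i j : V) : Prop :=
  forall x, in_closure (chamber E w) x -> in_Dtor pi x ->
    exists k : Z, Rminus (x i) (x j) = IZR k.

Definition trb E w pi (i j : V) : bool :=
  if excluded_middle_informative (tor_rel E w pi i j) then true else false.

Lemma trbP E w pi i j : reflect (tor_rel E w pi i j) (trb E w pi i j).
Proof. by rewrite /trb; case: excluded_middle_informative => H; constructor. Qed.

Lemma tor_refl E w pi i : tor_rel E w pi i i.
Proof. move=> x _ _; exists 0%Z; rewrite /Rminus Rplus_opp_r; done. Qed.

Lemma tor_trans E w pi i j k :
  tor_rel E w pi i j -> tor_rel E w pi j k -> tor_rel E w pi i k.
Proof.
move=> H1 H2 x Hc HD; have [k1 e1] := H1 x Hc HD; have [k2 e2] := H2 x Hc HD.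
exists (k1 + k2)%Z; rewrite plus_IZR -e1 -e2 /Rminus; ring.
Qed.

Lemma tor_sym E w pi i j : tor_rel E w pi i j -> tor_rel E w pi j i.
Proof.
move=> H1 x Hc HD; have [k1 e1] := H1 x Hc HD.
exists (- k1)%Z; rewrite opp_IZR -e1 /Rminus; ring.
Qed.

Lemma trb_equiv E w pi : {in [set: V] & &, equivalence_rel (trb E w pi)}.
Proof.
move=> x y z _ _ _; split; first by apply/trbP; apply: tor_refl.
move/trbP => Hxy; apply/idP/idP => /trbP H; apply/trbP.
- exact: tor_trans (tor_sym Hxy) H.
- exact: tor_trans Hxy H.
Qed.

Definition pb E w pi := equivalence_partition (trb E w pi) [set: V].

Lemma Dtor_pb E w pi x : in_closure (chamber E w) x -> in_Dtor pi x ->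
  in_Dtor (pb E w pi) x.
Proof.
move=> Hc HD B; rewrite /pb /equivalence_partition => /imsetP [k _ ->] i j.
rewrite !inE /= => /trbP Hi /trbP Hj.
exact: (tor_trans (tor_sym Hi) Hj) x Hc HD.
Qed.

Lemma pb_closure E w pi : is_partition pi -> is_tor_closure E w pi (pb E w pi).
Proof.
move=> Hpi; split; first exact: equivalence_partitionP (trb_equiv E w pi).
have Hr : refines pi (pb E w pi).
  move=> B HB; have [i Hi] := part_mem Hpi HB.
  exists [set y in [set: V] | trb E w pi i y].
    by apply: imset_f; rewrite inE.
  apply/subsetP => j Hj; rewrite !inE /=; apply/trbP => x Hc HD.
  exact: HD B HB i j Hi Hj.
split => //; split.
  move=> x Hc; split; first exact: Dtor_pb.
  exact: Dtor_ref.
move=> p Hp Hr' Hs B HB; have [i Hi] := part_mem Hp HB.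
exists [set y in [set: V] | trb E w pi i y].
  by apply: imset_f; rewrite inE.
apply/subsetP => j Hj; rewrite !inE /=; apply/trbP => x Hc HD.
exact: (proj1 (Hs x Hc) HD) B HB i j Hi Hj.
Qed.

Lemma tor_cl_eq E w pi : is_partition pi -> tor_cl E w pi = pb E w pi.
Proof.
move=> Hpi.
have H := epsilon_spec (inhabits pi) (is_tor_closure E w pi)
            (ex_intro _ _ (pb_closure E w Hpi)).
rewrite /tor_cl; move: H; set q := epsilon _ _ => H.
have [Hq [Hrq [Hsq Hmq]]] := H.
have [Hp [Hrp [Hsp Hmp]]] := pb_closure E w Hpi.
apply: refines_antisym => //.
- exact: Hmp.
- exact: Hmq.
Qed.

Lemma eqp_ref (R1 R2 : rel V) : (forall i j, R1 i j -> R2 i j) ->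
  refines (equivalence_partition R1 [set: V]) (equivalence_partition R2 [set: V]).
Proof.
move=> H B; rewrite /equivalence_partition => /imsetP [k _ ->].
exists [set y in [set: V] | R2 k y]; first by apply: imset_f; rewrite inE.
by apply/subsetP => y; rewrite !inE /=; apply: H.
Qed.

End General.
Section Construct.
Variable V : finType.
Implicit Types (pi p q : {set {set V}}) (E w : rel V).
Local Open Scope R_scope.

Lemma rank_lt (w' : rel V) u v : (forall a b, w' a b -> ~~ connect w' b a) ->
  w' u v -> (#|[set a | connect w' a u]| < #|[set a | connect w' a v]|)%N.
Proof.
move=> Hac Huv; apply: proper_card; apply/properP; split.
  apply/subsetP => a; rewrite !inE => H; exact: connect_trans H (connect1 Huv).
exists v; rewrite !inE ?connect0 //; exact: Hac.
Qed.

Lemma construct E w w' pi s t : is_partition pi -> orientation E w' ->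
  (forall u v, w' u v -> ~~ connect w' v u) -> toric_equiv w' w ->
  ~~ connect (contr_rel w' pi) s t ->
  exists x, in_closure (chamber E w) x /\ in_Dtor pi x /\
            Rminus (x s) (x t) = Rinv 4.
Proof.
move=> Hpi Hor Hac Htor Hst.
pose b v := connect (contr_rel w' pi) s v.
pose x0 v := Rplus (Rinv 4) (if b v then Rinv 4 else 0).
pose r v := INR #|[set a | connect w' a v]|.
pose N := INR #|V|.
have bmono : forall u v, w' u v -> b u -> b v.
  move=> u v Huv Hu; apply: connect_trans Hu (connect1 _); by rewrite /contr_rel /= Huv.
exists x0; split; last split.
- move=> e He.
  have m1 := Rmin_l e 1; have m2 := Rmin_r e 1.
  have m0 : Rlt 0 (Rmin e 1) by apply: Rmin_glb_lt; lra.
  have N0 : Rle 0 N by apply: pos_INR.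
  pose eps := Rdiv (Rmin e 1) (8 * (N + 1)).
  have eps0 : Rlt 0 eps.
    rewrite /eps; apply: Rdiv_lt_0_compat; lra.
  have epsN : eps * (N + 1) = Rdiv (Rmin e 1) 8 by rewrite /eps; field; lra.
  have rN : forall v, Rle 0 (r v) /\ Rle (r v) N.
    move=> v; split; first exact: pos_INR.
    by apply: le_INR; apply/leP; apply: max_card.
  have er : forall v, Rle 0 (eps * r v) /\ Rlt (eps * r v) (Rdiv (Rmin e 1) 8).
    move=> v; have [h1 h2] := rN v; split.
      by apply: Rmult_le_pos; lra.
    have : Rle (eps * r v) (eps * N) by apply: Rmult_le_compat_l; lra.
    lra.
  pose y v := Rplus (x0 v) (eps * r v).
  have x0b : forall v, Rle (Rinv 4) (x0 v) /\ Rle (x0 v) (Rinv 2).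
    by move=> v; rewrite /x0; case: (b v); split; lra.
  have fy : forall v, frac_part (y v) = y v.
    move=> v; have [h1 h2] := er v; have [h3 h4] := x0b v.
    apply: frac_id; rewrite /y; lra.
  have ylt : forall u v, w' u v -> Rlt (y u) (y v).
    move=> u v Huv.
    have h1 : Rle (x0 u) (x0 v).
      rewrite /x0; case Hbu: (b u); first by rewrite (bmono _ _ Huv Hbu); lra.
      case: (b v); lra.
    have h2 : Rlt (r u) (r v) by apply: lt_INR; apply/ltP; apply: rank_lt.
    have : Rlt (eps * r u) (eps * r v) by apply: Rmult_lt_compat_l.
    rewrite /y; lra.
  exists y; split.
  + split.
    * move=> i j; rewrite (proj1 Hor) !fy => /orP [] /ylt; lra.
    * have -> : point_orientation E y = w'; last exact: Htor.
      apply: functional_extensionality => i; apply: functional_extensionality => j.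
      rewrite /point_orientation !fy.
      case Hw: (w' i j).
      - rewrite (proj1 Hor) Hw /=; case: Rlt_dec => // H; exfalso; apply: H; exact: ylt.
      - case HE: (E i j) => //=.
        move: HE; rewrite (proj1 Hor) Hw /= => Hji.
        case: Rlt_dec => // H; have := ylt _ _ Hji; lra.
  + move=> i; have [h1 h2] := er i.
    rewrite /y Rabs_left1; lra.
- move=> B HB i j Hi Hj; exists 0%Z.
  have tp : trivIset pi by case/and3P: Hpi.
  have pe : pblock pi i = pblock pi j by rewrite (def_pblock tp HB Hi) (def_pblock tp HB Hj).
  have cij : contr_rel w' pi i j by rewrite /contr_rel /= pe eqxx orbT.
  have cji : contr_rel w' pi j i by rewrite /contr_rel /= pe eqxx orbT.
  have bij : b i = b j.
    apply/idP/idP => H; [exact: connect_trans H (connect1 cij)|exact: connect_trans H (connect1 cji)].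
  rewrite /x0 bij; simpl; ring.
- rewrite /x0 /b connect0 (negbTE Hst); ring.
Qed.

Lemma trb_scc E w w' pi i j : is_partition pi -> orientation E w' ->
  (forall u v, w' u v -> ~~ connect w' v u) -> toric_equiv w' w ->
  trb E w pi i j ->
  connect (contr_rel w' pi) i j && connect (contr_rel w' pi) j i.
Proof.
move=> Hpi Hor Hac Htor /trbP Ht.
apply/andP; split; apply/negPn/negP => Hn.
- have [x [Hc [HD Hx]]] := construct Hpi Hor Hac Htor Hn.
  have [k Hk] := Ht x Hc HD; have [n1 _] := noint k; apply: n1; lra.
- have [x [Hc [HD Hx]]] := construct Hpi Hor Hac Htor Hn.
  have [k Hk] := Ht x Hc HD; have [_ n2] := noint k; apply: n2; lra.
Qed.

End Construct.
Section K3part.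

Definition o0 : 'I_3 := @Ordinal 3 0 isT.
Definition o1 : 'I_3 := @Ordinal 3 1 isT.
Definition o2 : 'I_3 := @Ordinal 3 2 isT.
Definition A0 : {set 'I_3} := [set (inord 0 : 'I_3)].
Definition A12 : {set 'I_3} := [set (inord 1 : 'I_3); (inord 2 : 'I_3)].

Lemma mem_A0 (u : 'I_3) : (u \in A0) = (nat_of_ord u == 0).
Proof. rewrite !inE -val_eqE /= inordK //. Qed.

Lemma mem_A12 (u : 'I_3) : (u \in A12) = (nat_of_ord u != 0).
Proof. rewrite !inE -!val_eqE /= !inordK //; by case: u => [[|[|[|m]]] Hu]. Qed.

Lemma A0A12 : A0 != A12.
Proof. apply/negP => /eqP /setP /(_ o0); by rewrite mem_A0 mem_A12. Qed.

Lemma pi3E : pi3 = [set A0; A12].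
Proof. by []. Qed.

Lemma pi3_part : is_partition pi3.
Proof.
rewrite /is_partition /partition pi3E; apply/and3P; split.
- apply/eqP/setP => u; rewrite inE; apply/bigcupP.
  case Hu: (nat_of_ord u == 0).
  + by exists A0; [rewrite !inE eqxx | rewrite mem_A0].
  + by exists A12; [rewrite !inE eqxx orbT | rewrite mem_A12 Hu].
- have [] := @trivIsetU1 _ A0 [set A12]; last done.
  + move=> B; rewrite inE => /eqP ->; rewrite /A0 disjoints1 mem_A12 inordK //.
  + exact: trivIset1.
  + rewrite inE; apply/negP => /eqP /setP /(_ o1); by rewrite inE mem_A12.
- rewrite !inE; apply/negP => /orP [] /eqP /setP.
  + by move/(_ o0); rewrite inE mem_A0.
  + by move/(_ o1); rewrite inE mem_A12.
Qed.

Lemma pbl (u : 'I_3) : pblock pi3 u = if nat_of_ord u == 0 then A0 else A12.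
Proof.
have tp : trivIset pi3 by case/and3P: pi3_part.
case Hu: (nat_of_ord u == 0).
- by apply: def_pblock => //; [rewrite pi3E !inE eqxx | rewrite mem_A0].
- by apply: def_pblock => //; [rewrite pi3E !inE eqxx orbT | rewrite mem_A12 Hu].
Qed.

Definition w3f : rel 'I_3 :=
  [rel u v | [|| (nat_of_ord u == 0) && (nat_of_ord v == 1),
                 (nat_of_ord u == 0) && (nat_of_ord v == 2) |
                 (nat_of_ord u == 1) && (nat_of_ord v == 2)]].

Lemma K3_simple : simple_graph K3.
Proof. split => [u v|u]; [by rewrite /K3 /= eq_sym | by rewrite /K3 /= eqxx]. Qed.

Lemma K3_or_w3 : orientation K3 w3.
Proof.
split => u v; by case: u => [[|[|[|m]]] Hu] //; case: v => [[|[|[|n]]] Hv].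
Qed.

Lemma K3_or_w3f : orientation K3 w3f.
Proof.
split => u v; by case: u => [[|[|[|m]]] Hu] //; case: v => [[|[|[|n]]] Hv].
Qed.

Lemma w3_acyc : forall u v, w3 u v -> ~~ connect w3 v u.
Proof.
pose f (u : 'I_3) := if nat_of_ord u == 2 then 0 else (nat_of_ord u).+1.
have Hf : forall u v, w3 u v -> (f u < f v)%N.
  by move=> u v; case: u => [[|[|[|m]]] Hu] //; case: v => [[|[|[|n]]] Hv].
move=> u v Huv; apply/negP => /(connect_mono (f := f)) H.
have := Hf _ _ Huv; have := H (fun a b h => ltnW (Hf a b h)). by move=> h1; rewrite ltnNge h1.
Qed.

Lemma w3f_acyc : forall u v, w3f u v -> ~~ connect w3f v u.
Proof.
pose f (u : 'I_3) := nat_of_ord u.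
have Hf : forall u v, w3f u v -> (f u < f v)%N.
  by move=> u v; case: u => [[|[|[|m]]] Hu] //; case: v => [[|[|[|n]]] Hv].
move=> u v Huv; apply/negP => /(connect_mono (f := f)) H.
have := Hf _ _ Huv; have := H (fun a b h => ltnW (Hf a b h)). by move=> h1; rewrite ltnNge h1.
Qed.

Lemma w3f_tor : toric_equiv w3f w3.
Proof.
apply: rst_sym; apply: rst_step; exists o2; split.
- by move=> u; case: u => [[|[|[|m]]] Hu].
- by move=> u v; case: u => [[|[|[|m]]] Hu] //; case: v => [[|[|[|n]]] Hv].
Qed.

Lemma scc_w3f (u v : 'I_3) :
  connect (contr_rel w3f pi3) u v && connect (contr_rel w3f pi3) v u ->
  v \in pblock pi3 u.
Proof.
pose g (a : 'I_3) := nat_of_bool (nat_of_ord a != 0).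
have Hg : forall a b, contr_rel w3f pi3 a b -> (g a <= g b)%N.
  move=> a b; rewrite /contr_rel /= !pbl.
  case: a => [[|[|[|m]]] Ha] //; case: b => [[|[|[|n]]] Hb] //=;
    by rewrite eq_sym (negbTE A0A12).
case/andP => /(connect_mono Hg) H1 /(connect_mono Hg) H2.
rewrite pbl; move: H1 H2; rewrite /g.
case: u => [[|[|[|m]]] Hu] //; case: v => [[|[|[|n]]] Hv] //= _ _;
  by rewrite ?mem_A0 ?mem_A12.
Qed.

Lemma tor_K3 : tor_cl K3 w3 pi3 = pi3.
Proof.
rewrite tor_cl_eq; last exact: pi3_part.
have [Hp [Hr _]] := pb_closure K3 w3 pi3_part.
apply: refines_antisym => //; first exact: pi3_part.
move=> B; rewrite /pb /equivalence_partition => /imsetP [k _ ->].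
exists (pblock pi3 k).
  apply: pblock_mem; case/and3P: pi3_part => /eqP -> _ _; by rewrite inE.
apply/subsetP => y; rewrite !inE /= => Hy.
apply: scc_w3f; apply: (trb_scc pi3_part K3_or_w3f w3f_acyc w3f_tor Hy).
Qed.

Lemma ord_K3 : ord_cl w3 pi3 = [set [set: 'I_3]].
Proof.
have c : forall a b, contr_rel w3 pi3 a b -> connect (contr_rel w3 pi3) a b.
  by move=> a b h; apply: connect1.
have c20 : connect (contr_rel w3 pi3) o2 o0 by apply: c; rewrite /contr_rel /= .
have c01 : connect (contr_rel w3 pi3) o0 o1 by apply: c; rewrite /contr_rel /= .
have c12 : connect (contr_rel w3 pi3) o1 o2 by apply: c; rewrite /contr_rel /= !pbl.
have to0 : forall a, connect (contr_rel w3 pi3) a o0.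
  move=> a; case: a => [[|[|[|m]]] Ha] //.
  - by have -> : Ordinal Ha = o0 by apply: val_inj.
  - have -> : Ordinal Ha = o1 by apply: val_inj.
    exact: connect_trans c12 c20.
  - by have -> : Ordinal Ha = o2 by apply: val_inj.
have fr0 : forall a, connect (contr_rel w3 pi3) o0 a.
  move=> a; case: a => [[|[|[|m]]] Ha] //.
  - by have -> : Ordinal Ha = o0 by apply: val_inj.
  - by have -> : Ordinal Ha = o1 by apply: val_inj.
  - have -> : Ordinal Ha = o2 by apply: val_inj.
    exact: connect_trans c01 c12.
have all : forall a b, connect (contr_rel w3 pi3) a b.
  by move=> a b; exact: connect_trans (to0 a) (fr0 b).
apply/setP => B; rewrite inE /ord_cl /equivalence_partition.
apply/imsetP/eqP => [[k _ ->]|->].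
- by apply/setP => y; rewrite !inE !all.
- by exists o0; rewrite ?inE //; apply/setP => y; rewrite !inE !all.
Qed.

Lemma pi3_ne : pi3 <> [set [set: 'I_3]].
Proof.
move=> H; have : A0 \in [set [set: 'I_3]] by rewrite -H pi3E !inE eqxx.
rewrite inE => /eqP /setP /(_ o1); by rewrite mem_A0 inE.
Qed.

End K3part.

Theorem mainTheorem4 (V : finType) (E : rel V) (w : rel V)
  (pi pi' : {set {set V}}) :
  simple_graph E -> acyclic_orientation E w ->
  is_partition pi -> is_partition pi' ->
  (* (a) *)
  (ord_closed w pi -> tor_closed E w pi) /\
  (* (b) *)
  (refines pi pi' -> refines (tor_cl E w pi) (tor_cl E w pi')) /\
  (* (c) *)
  (refines pi pi' -> refines pi' (tor_cl E w pi) ->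
     tor_cl E w pi' = tor_cl E w pi) /\
  (* (d) *)
  refines (tor_cl E w pi) (ord_cl w pi) /\
  (* the K_3 example: converse of (a) and equality in (d) fail *)
  (simple_graph K3 /\ acyclic_orientation K3 w3 /\ is_partition pi3 /\
   tor_cl K3 w3 pi3 = pi3 /\ ord_cl w3 pi3 = [set [set: 'I_3]] /\
   pi3 <> [set [set: 'I_3]]).
Proof.
move=> _ [Hor Hac] Hpi Hpi'.
have Hd : refines (tor_cl E w pi) (ord_cl w pi).
  rewrite tor_cl_eq //; apply: eqp_ref => i j.
  exact: trb_scc Hpi Hor Hac (rst_refl _ _ _).
split; [|split; [|split; [|split]]].
- move=> Hoc; rewrite /tor_closed.
  have [Hp [Hr _]] := pb_closure E w Hpi.
  apply: refines_antisym => //; first by rewrite tor_cl_eq.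
  + by rewrite -[X in refines _ X]Hoc.
  + by rewrite tor_cl_eq.
- move=> Hr; rewrite !tor_cl_eq //; apply: eqp_ref => i j /trbP H; apply/trbP.
  move=> x Hc HD; exact: (H x Hc (Dtor_ref Hr HD)).
- move=> Hr Hr'.
  have eq : trb E w pi' = trb E w pi.
    apply: functional_extensionality => i; apply: functional_extensionality => j.
    apply/idP/idP => /trbP H; apply/trbP => x Hc HD.
    + apply: (H x Hc); apply: (Dtor_ref Hr'); rewrite tor_cl_eq //; exact: (Dtor_pb Hc HD).
    + exact: (H x Hc (Dtor_ref Hr HD)).
  by rewrite !tor_cl_eq // /pb eq.
- exact: Hd.
- split; first exact: K3_simple.
  split; first by split; [exact: K3_or_w3|exact: w3_acyc].
  split; first exact: pi3_part.
  split; first exact: tor_K3.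
  split; first exact: ord_K3.
  exact: pi3_ne.
Qed.
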